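(* Let $R$ be a ring, $\mathbf{M}$ a class of left $R$-modules, and $\kappa$ an infinite regular cardinal such that $\mathbf{M}$ is closed under isomorphism and under $\kappa$-restricted direct products $\prod^\kappa_{i\in I}M_i$ (for any index set $I$ and any $M_i\in\mathbf{M}$). Let $0\to A\to M\to N$ be an exact sequence of left $R$-modules with $M,N\in\mathbf{M}$. Then $A$ is isomorphic to the inverse limit of an inverse system (over an upward directed index set) of modules in $\mathbf{M}$ with one-to-one connecting homomorphisms.
   Context: $\prod^\kappa_{i\in I}M_i=\{x\in\prod_{i\in I}M_i \mid |\{i: x_i\neq0\}|<\kappa\}$. Rings are associative with unit, modules are unital. *)

(* Defs.v *)
From HB Require Import structures.
From mathcomp Require Import all_boot all_order all_algebra.
Set Implicit Arguments. Unset Strict Implicit. Unset Printing Implicit Defensive.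
Import GRing.Theory.
Local Open Scope ring_scope.

Definition lin (R : pzRingType) (U V : lmodType R) (f : U -> V) : Prop :=
  forall (a : R) (u v : U), f (a *: u + v) = a *: f u + f v.

Definition lin_prod (R : pzRingType) (U : lmodType R) (I : Type)
  (Mi : I -> lmodType R) (f : U -> forall i, Mi i) : Prop :=
  forall i, lin (fun u => f u i).

Definition mod_iso (R : pzRingType) (U V : lmodType R) : Prop :=
  exists f : U -> V, lin f /\ bijective f.

(* Cardinals are represented by types: |X| < |K| *)
Definition card_lt (X K : Type) : Prop :=
  (exists f : X -> K, injective f) /\ ~ (exists g : K -> X, injective g).

Definition small (K T : Type) (S : T -> Prop) : Prop := card_lt {x | S x} K.

Definition infinite_regular (K : Type) : Prop :=
  (exists f : nat -> K, injective f) /\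
  forall (X T : Type) (S : X -> T -> Prop),
    card_lt X K -> (forall x, small K (S x)) ->
    small K (fun t => exists x, S x t).

Definition modclass (R : pzRingType) := lmodType R -> Prop.

Definition iso_closed (R : pzRingType) (C : modclass R) : Prop :=
  forall U V : lmodType R, C U -> mod_iso U V -> C V.

(* P is isomorphic (via f) to the kappa-restricted product of the Mi, i.e.
   f is a linear embedding into prod_i Mi whose image is exactly the set of
   families with fewer than kappa nonzero coordinates *)
Definition is_restricted_product (R : pzRingType) (K I : Type)
  (Mi : I -> lmodType R) (P : lmodType R) (f : P -> forall i, Mi i) : Prop :=
  lin_prod f /\ injective f /\
  forall x : (forall i, Mi i), (exists p, f p = x) <-> small K (fun i => x i <> 0).

Definition closed_restricted_products (R : pzRingType) (C : modclass R)
  (K : Type) : Prop :=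
  forall (I : Type) (Mi : I -> lmodType R) (P : lmodType R)
         (f : P -> forall i, Mi i),
    (forall i, C (Mi i)) -> is_restricted_product K f -> C P.

Definition directed_poset (J : Type) (le : J -> J -> Prop) : Prop :=
  inhabited J /\
  (forall j, le j j) /\
  (forall i j k, le i j -> le j k -> le i k) /\
  (forall i j, le i j -> le j i -> i = j) /\
  (forall i j, exists k, le i k /\ le j k).

Definition inverse_system (R : pzRingType) (J : Type) (le : J -> J -> Prop)
  (N : J -> lmodType R) (phi : forall j k, le j k -> N k -> N j) : Prop :=
  (forall j k (h : le j k), lin (phi j k h)) /\
  (forall j (h : le j j) (x : N j), phi j j h x = x) /\
  (forall i j k (h1 : le i j) (h2 : le j k) (h3 : le i k) (x : N k),
      phi i j h1 (phi j k h2 x) = phi i k h3 x).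

(* A is isomorphic (via g) to the inverse limit of the system: g is a linear
   embedding into prod_j N_j whose image is exactly the compatible families *)
Definition is_inverse_limit (R : pzRingType) (J : Type) (le : J -> J -> Prop)
  (N : J -> lmodType R) (phi : forall j k, le j k -> N k -> N j)
  (A : lmodType R) (g : A -> forall j, N j) : Prop :=
  lin_prod g /\ injective g /\
  forall x : (forall j, N j),
    (exists a, g a = x) <-> (forall j k (h : le j k), phi j k h (x k) = x j).

(* Main.v *)
Require Import Defs.
From HB Require Import structures.
From mathcomp Require Import all_boot all_order all_algebra.
From mathcomp Require Import boolp functions.
From Stdlib Require Import FunctionalExtensionality.
Import GRing.Theory.
Local Open Scope ring_scope.
Set Implicit Arguments. Unset Strict Implicit.

Lemma sig_eqP (T : Type) (P : T -> Prop) (s1 s2 : {x | P x}) :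
  sval s1 = sval s2 -> s1 = s2.
Proof. case: s1 s2 => [x1 h1] [x2 h2] /= E; subst x2; congr exist; exact: Prop_irrelevance. Qed.

Section Card.
Variable K : Type.
Hypothesis hK : infinite_regular K.

Lemma lt_inj (X X' : Type) (f : X' -> X) : injective f -> card_lt X K -> card_lt X' K.
Proof.
move=> fi [[h hi] nh]; split; first by exists (h \o f) => x y /hi /fi.
by case=> g gi; apply: nh; exists (f \o g) => x y /fi /gi.
Qed.

Lemma small_sub (T : Type) (S1 S2 : T -> Prop) :
  (forall t, S1 t -> S2 t) -> small K S2 -> small K S1.
Proof.
move=> sub; apply: (@lt_inj _ _ (fun s : {t | S1 t} => exist S2 (sval s) (sub _ (svalP s)))).
by move=> x y /(congr1 sval) /= E; apply: sig_eqP.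
Qed.

Lemma bool_lt : card_lt bool K.
Proof.
case: hK => [[f fi] _]; split.
  by exists (fun b => f (if b then 0%N else 1%N)) => [[] []] // /fi.
case=> g gi.
have h01 : g (f 0%N) <> g (f 1%N) by move=> /gi /fi.
have h02 : g (f 0%N) <> g (f 2%N) by move=> /gi /fi.
have h12 : g (f 1%N) <> g (f 2%N) by move=> /gi /fi.
by move: h01 h02 h12; case: (g (f 0%N)); case: (g (f 1%N)); case: (g (f 2%N)).
Qed.

Lemma small_sub_bool (T : Type) (S : T -> Prop) (b0 : bool) :
  (forall s1 s2 : {t | S t}, s1 = s2) -> small K S.
Proof.
move=> ss; apply: (@lt_inj _ _ (fun _ : {t | S t} => b0)); last exact: bool_lt.
by move=> x y _; apply: ss.
Qed.

Lemma small0 (T : Type) : small K (fun _ : T => False).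
Proof. by apply: (@small_sub_bool _ _ true) => [[]]. Qed.

Lemma small1 (T : Type) (t0 : T) : small K (fun t => t = t0).
Proof. by apply: (@small_sub_bool _ _ true) => s1 s2; apply: sig_eqP; rewrite (svalP s1) (svalP s2). Qed.

Lemma smallU (T : Type) (S1 S2 : T -> Prop) :
  small K S1 -> small K S2 -> small K (fun t => S1 t \/ S2 t).
Proof.
move=> h1 h2.
have := hK.2 bool T (fun b t => if b then S1 t else S2 t) bool_lt.
case/(_ _)/Wrap => [[]//|] H; apply: small_sub H => t [] h; [by exists true | by exists false].
Qed.

Lemma not_small_all (T : Type) (S : K -> Prop) : (forall k, S k) -> ~ small K S.
Proof.
move=> all [_ nh]; apply: nh; exists (fun k => exist S k (all k)).
by move=> x y /(congr1 sval).
Qed.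
End Card.

Section Mod.
Variables (R : pzRingType) (K : Type) (M N : lmodType R).

Definition Q0 := (M * (K -> N))%type.
Definition SP (T : K -> Prop) (p : Q0) : Prop :=
  (forall k, T k -> p.2 k = 0) /\ small K (fun k => p.2 k <> 0).
Definition inS (hK : infinite_regular K) (T : K -> Prop) : {pred Q0} :=
  fun p => `[< SP T p >].

Lemma inSP hK T p : (p \in inS hK T) <-> SP T p.
Proof. by rewrite /inS unfold_in; split => /asboolP. Qed.

Lemma fctD (f g : K -> N) k : (f + g) k = f k + g k. Proof. by []. Qed.
Lemma fctZ (a : R) (f : K -> N) k : (a *: f) k = a *: f k. Proof. by []. Qed.
Lemma fct0 k : (0 : K -> N) k = 0. Proof. by []. Qed.
Lemma pD1 (u v : Q0) : (u + v).1 = u.1 + v.1. Proof. by []. Qed.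
Lemma pD2 (u v : Q0) : (u + v).2 = u.2 + v.2. Proof. by []. Qed.
Lemma pZ1 a (u : Q0) : (a *: u).1 = a *: u.1. Proof. by []. Qed.
Lemma pZ2 a (u : Q0) : (a *: u).2 = a *: u.2. Proof. by []. Qed.
Lemma p01 : (0 : Q0).1 = 0. Proof. by []. Qed.
Lemma p02 : (0 : Q0).2 = 0. Proof. by []. Qed.

Lemma inS_closed hK T : subsemimod_closed (inS hK T).
Proof.
split; first split.
- apply/inSP; split => //. refine (@small_sub K K _ _ _ (small0 hK K)). by move=> k /=; apply.
- move=> u v /inSP [u1 u2] /inSP [v1 v2]; apply/inSP; split.
    by move=> k Tk; rewrite pD2 fctD u1 // v1 // addr0.
  have hU := (@smallU K hK _ _ _ u2 v2). apply: (@small_sub K K _ _ _ hU) => k h.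
  case: (pselect (u.2 k = 0)) => [e|]; last by left.
  by right => e2; apply: h; rewrite pD2 fctD e e2 addr0.
- move=> a u /inSP [u1 u2]; apply/inSP; split.
    by move=> k Tk; rewrite pZ2 fctZ u1 // scaler0.
  apply: (@small_sub K K _ _ _ u2) => k h e; apply: h; by rewrite pZ2 fctZ e scaler0.
Qed.

HB.instance Definition _ hK T := GRing.isSubmodClosed.Build R Q0 (inS hK T) (inS_closed hK T).
Definition NT hK T := {p : Q0 | p \in inS hK T}.
HB.instance Definition _ hK T := [isSub for (@sval Q0 (fun p => p \in inS hK T)) : NT hK T -> Q0].
HB.instance Definition _ hK T := [Choice of NT hK T by <:].
HB.instance Definition _ hK T := [SubChoice_isSubLmodule of NT hK T by <:].

End Mod.

Lemma small_map (K T1 T2 : Type) (h : T1 -> T2) (S1 : T1 -> Prop) (S2 : T2 -> Prop) :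
  (forall t, S1 t -> S2 (h t)) ->
  (forall a b, S1 a -> S1 b -> h a = h b -> a = b) -> small K S2 -> small K S1.
Proof.
move=> H Hi; apply: (@lt_inj _ _ _ (fun s : {t | S1 t} => exist S2 (h (sval s)) (H _ (svalP s)))).
move=> [a ha] [b hb] /(congr1 sval) /= E; apply: sig_eqP => /=; exact: Hi.
Qed.

Section Main.
Variables (R : pzRingType) (K : Type) (M N : lmodType R) (hK : infinite_regular K).
Variables (beta : M -> N) (hbeta : lin beta).

Lemma beta0 : beta 0 = 0.
Proof.
have := hbeta 1 0 0; rewrite !scale1r addr0 => E.
by apply: (addrI (beta 0)); rewrite addr0 -E.
Qed.

Lemma betaL a u v : beta (a *: u + v) = a *: beta u + beta v.
Proof. exact: hbeta. Qed.

Definition ind (D : K -> Prop) (v : N) : K -> N :=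
  fun k => if pselect (D k) then v else 0.

Lemma ind0 D : ind D 0 = 0.
Proof. by apply: funext => k; rewrite /ind; case: pselect. Qed.

Notation NTT := (@NT R K M N hK).

Definition qP T T' (x : NTT T') : @Q0 R K M N :=
  ((val x).1, (val x).2 + ind (fun k => T' k /\ ~ T k) (beta (val x).1)).

Definition Phi T T' (x : NTT T') : NTT T := insubd 0 (qP T x).

Lemma SPx T (x : NTT T) : SP T (val x).
Proof. exact/inSP/(valP x). Qed.

Lemma valPhi T T' (x : NTT T') : (forall k, T k -> T' k) -> small K T' ->
  val (Phi T x) = qP T x.
Proof.
move=> sub sT'; rewrite /Phi insubdK //; apply/(inSP hK).
have [x1 x2] := SPx x.
split.
  move=> k Tk; rewrite /qP /= fctD x1; last exact: sub.
  by rewrite add0r /ind; case: pselect => // -[_ []].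
apply: (@small_sub K K _ _ _ (@smallU K hK _ _ _ x2 sT')) => k h.
case: (pselect ((val x).2 k = 0)) => [e|]; last by left.
right; move: h; rewrite /qP /= fctD e add0r /ind.
by case: pselect => [[]|] // _ [].
Qed.


Lemma pair_eta (A B : Type) (p : A * B) : p = (p.1, p.2).
Proof. by case: p. Qed.

Lemma Phi_lin T T' : (forall k, T k -> T' k) -> small K T' -> lin (@Phi T T').
Proof.
move=> sub sT' a u v; apply: val_inj.
rewrite GRing.valD GRing.valZ !valPhi // /qP GRing.valD GRing.valZ.
apply: injective_projections; rewrite ?pD1 ?pZ1 ?pD2 ?pZ2 //=.
apply: (@funext K N) => k; rewrite !fctD !fctZ !fctD /ind betaL.
case: pselect => H; last by rewrite !addr0.
by rewrite scalerDr addrACA.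
Qed.

Lemma Phi_id T (x : NTT T) : small K T -> Phi T x = x.
Proof.
move=> sT; apply: val_inj; rewrite valPhi // /qP.
rewrite (_ : ind _ _ = 0) ?addr0; first by case: (val x).
by apply: funext => k; rewrite /ind; case: pselect => // -[].
Qed.

Lemma Phi_comp T T' T'' (x : NTT T'') :
  (forall k, T k -> T' k) -> (forall k, T' k -> T'' k) -> small K T' -> small K T'' ->
  Phi T (Phi T' x) = Phi T x.
Proof.
move=> s1 s2 sT' sT''; apply: val_inj.
have s12 : forall k, T k -> T'' k by move=> k /s1 /s2.
rewrite (valPhi (Phi T' x) s1 sT') /qP (valPhi x s2 sT'') (valPhi x s12 sT'') /qP /=.
congr pair; apply: funext => k; rewrite !fctD /ind.
have := s1 k; have := s2 k.
by case: pselect => H1 /=; case: pselect => H2 /=; case: pselect => H3 /=;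
  rewrite ?addr0 //; tauto.
Qed.

Lemma Phi_inj T T' : (forall k, T k -> T' k) -> small K T' -> injective (@Phi T T').
Proof.
move=> sub sT' u v /(congr1 val); rewrite !valPhi // /qP => -[E1 E2].
apply: val_inj; rewrite [val u]pair_eta [val v]pair_eta E1; congr pair.
by move: E2; rewrite E1 => /addIr.
Qed.

Variables (A : lmodType R) (alpha : A -> M) (halpha : lin alpha).

Lemma g_in T (a : A) : ((alpha a, 0) : @Q0 R K M N) \in inS hK T.
Proof.
apply/(inSP hK); split => //.
by apply: (@small_sub K K _ _ _ (small0 hK K)) => k /=; apply.
Qed.

Definition gT T (a : A) : NTT T := insubd 0 ((alpha a, 0) : @Q0 R K M N).

Lemma val_gT T a : val (gT T a) = (alpha a, 0).
Proof. by rewrite /gT insubdK // g_in. Qed.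

End Main.

Section RP.
Variables (R : pzRingType) (K : Type) (M N : lmodType R) (hK : infinite_regular K).
Notation NTT := (@NT R K M N hK).

Definition Ii (T : K -> Prop) := option {k : K | ~ T k}.
Definition Mi T (i : Ii T) : lmodType R := if i is Some _ then N else M.
Definition fT T (x : NTT T) : forall i : Ii T, Mi i :=
  fun i => match i as i0 return Mi i0 with None => (val x).1 | Some k => (val x).2 (sval k) end.

Lemma NT_rp T : is_restricted_product K (@fT T).
Proof.
split; [|split].
- by move=> [k|] a u v /=.
- move=> u v E; apply: val_inj.
  have E1 := congr1 (fun f : (forall i : Ii T, Mi i) => f None) E.
  rewrite [val u]pair_eta [val v]pair_eta; congr pair; first exact: E1.
  apply: (@funext K N) => k; case: (pselect (T k)) => h.
    by rewrite (SPx u).1 // (SPx v).1.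
  exact: (congr1 (fun f : (forall i : Ii T, Mi i) => f (Some (exist _ k h))) E).
- move=> x; split.
  + case=> p <-; have [p1 p2] := SPx p.
    have [k0 _] : exists k0 : K, True by case: hK.1 => f _; exists (f 0%N).
    apply: (@small_map K (Ii T) (option K) (omap sval) _
              (fun o : option K => if o is Some k then (val p).2 k <> 0 else True)).
    * by move=> [[k hk]|].
    * by move=> [[a ha]|] [[b hb]|] //= _ _ [E]; congr Some; apply: sig_eqP.
    * apply: (@small_sub K _ _ (fun o => o = None \/ (exists k, o = Some k /\ (val p).2 k <> 0))).
        by move=> [k|] h; [right; exists k | left].
      apply: (@smallU K hK _ _ _ (small1 hK None)).
      apply: (@small_map K (option K) K (fun o => if o is Some k then k else k0) _
                (fun k => (val p).2 k <> 0) _ _ p2).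
        by move=> o [k [-> h]].
      by move=> a b [ka [-> _]] [kb [-> _]] /= ->.
  + move=> hx.
    pose y : K -> N := fun k => match pselect (T k) with
        left _ => 0 | right h => x (Some (exist _ k h)) end.
    pose hmap k : Ii T := match pselect (T k) with
        left _ => None | right h => Some (exist _ k h) end.
    have Hin : ((x None, y) : @Q0 R K M N) \in inS hK T.
      apply/(inSP hK); split.
        by move=> k Tk /=; rewrite /y; case: pselect.
      apply: (@small_map K K (Ii T) hmap _ (fun i => x i <> 0) _ _ hx).
        by move=> k /=; rewrite /y /hmap; case: pselect.
      move=> a b /=; rewrite /y /hmap; case: pselect => ha; case: pselect => hb //.
      by move=> _ _ [E].
    exists (insubd 0 ((x None, y) : @Q0 R K M N)).
    apply: functional_extensionality_dep => -[[k hk]|]; rewrite /fT insubdK //=.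
    rewrite /y; case: pselect => h //.
    by rewrite (Prop_irrelevance h hk).
Qed.

End RP.

Unset Implicit Arguments.

Theorem corollary8 (R : pzRingType) (C : modclass R) (K : Type)
  (hK : infinite_regular K)
  (hiso : iso_closed C) (hprod : closed_restricted_products C K)
  (A M N : lmodType R) (alpha : A -> M) (beta : M -> N)
  (halpha : lin alpha) (hbeta : lin beta)
  (hinj : injective alpha)
  (hexact : forall m : M, (exists a, alpha a = m) <-> beta m = 0)
  (hM : C M) (hN : C N) :
  exists (J : Type) (le : J -> J -> Prop) (Ns : J -> lmodType R)
         (phi : forall j k, le j k -> Ns k -> Ns j) (g : A -> forall j, Ns j),
    directed_poset le /\
    (forall j, C (Ns j)) /\
    inverse_system phi /\
    (forall j k (h : le j k), injective (phi j k h)) /\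
    is_inverse_limit phi g.
Proof.
pose J := {T : K -> Prop | small K T}.
pose le := fun j k : J => forall t, sval j t -> sval k t.
pose j0 : J := exist _ (fun _ => False) (small0 hK K).
have ba : forall a, beta (alpha a) = 0 by move=> a; apply/hexact; exists a.
exists J, le, (fun j => (@NT R K M N hK (sval j) : lmodType R)),
  (fun j k _ => @Phi R K M N hK beta (sval j) (sval k)),
  (fun a j => @gT R K M N hK A alpha (sval j) a).
split; [|split; [|split; [|split]]].
- split; first exact: (inhabits j0).
  split; first by move=> j t.
  split; first by move=> i j k h1 h2 t /h1 /h2.
  split.
    move=> [T1 s1] [T2 s2] h1 h2; apply: sig_eqP => /=.
    apply: funext => t; apply: propext; split; [exact: h1 | exact: h2].
  move=> [T1 s1] [T2 s2]; exists (exist _ (fun t => T1 t \/ T2 t) (smallU hK s1 s2)).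
  by split => t /=; auto.
- move=> j; apply: (hprod _ _ _ (@fT R K M N hK (sval j)) _ (NT_rp M N hK (sval j))).
  by move=> [k|] /=; [exact: hN | exact: hM].
- split; first by move=> j k h; apply: Phi_lin => //; exact: svalP.
  split; first by move=> j h x; apply: Phi_id; exact: svalP.
  move=> i j k h1 h2 h3 x; apply: Phi_comp => //; exact: svalP.
- by move=> j k h; apply: Phi_inj => //; exact: svalP.
- split; [|split].
  + move=> j a u v /=; apply: val_inj.
    rewrite GRing.valD GRing.valZ !val_gT halpha.
    apply: injective_projections => //=.
    by rewrite scaler0 addr0.
  + move=> a1 a2 /(congr1 (fun f => val (f j0))); rewrite !val_gT => -[].
    exact: hinj.
  + move=> x; split.
      case=> a <- j k h /=; apply: val_inj; rewrite valPhi //; last exact: svalP.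
      by rewrite /qP !val_gT /= ba ind0 addr0.
    move=> hc.
    have hc' : forall j k : J, le j k ->
        val (x j) = qP beta (sval j) (x k).
      by move=> j k h; rewrite -(hc j k h) valPhi //; exact: svalP.
    pose m := (val (x j0)).1.
    have m_eq : forall j, (val (x j)).1 = m.
      by move=> j; rewrite /m (hc' j0 j) //.
    have bm : beta m = 0.
      apply: contrapT => nz.
      have [_ s0] := SPx (x j0).
      apply: (not_small_all K _ s0) => k0 /=.
      pose j1 : J := exist _ (fun t => t = k0) (small1 hK k0).
      have := hc' j0 j1 (fun t (f : False) => match f with end).
      rewrite /qP => /(congr1 snd) /= ->.
      rewrite fctD (SPx (x j1)).1 //= add0r m_eq /ind.
      case: pselect => h /=; first exact: nz.
      by case: h; split.
    have [a ha] := (hexact m).2 bm.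
    exists a; apply: functional_extensionality_dep => j; apply: val_inj.
    rewrite val_gT [val (x j)]pair_eta m_eq ha; congr pair.
    apply: (@funext K N) => k; case: (pselect (sval j k)) => hjk.
      by rewrite (SPx (x j)).1.
    pose j' : J := exist _ (fun t => sval j t \/ t = k) (smallU hK (svalP j) (small1 hK k)).
    have := hc' j j' (fun t h => or_introl h).
    rewrite /qP => /(congr1 snd) /= ->; rewrite fctD m_eq bm ind0 addr0.
    by rewrite (SPx (x j')).1 //=; right.
Qed.
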